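(* Let $\mu^*=\max_{p\in(0,1]}\frac{p}{w_-(p)}$. Then $\mu^*>1$, and there exists a unique $p^*\in(0,1)$ such that $\mu^*w_-(p^* )=p^*$.
   Context: $w_-:[0,1]\to[0,1]$ is strictly increasing, thrice differentiable, with $w_-(0)=0$, $w_-(1)=1$, $w_-'(0)>1$, $w_-'(1)>1$ and $w_-'''(p)>0$ for all $p$ (so $w_-$ is strictly concave then strictly convex). *)

(* Defs.v *)
From Stdlib Require Import Reals.
From Coquelicot Require Import Coquelicot.
Open Scope R_scope.

Definition is_max_ratio (w : R -> R) (mu : R) : Prop :=
  (exists p, 0 < p <= 1 /\ p / w p = mu) /\
  (forall p, 0 < p <= 1 -> p / w p <= mu).

(* Main.v *)
Require Import Defs.
From Stdlib Require Import Reals Lra.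
From Coquelicot Require Import Coquelicot.
Open Scope R_scope.

Lemma quot_bound f x l eps h : h <> 0 ->
  Rabs ((f (x + h) - f x) / h - l) < eps ->
  exists q, q * h = f (x + h) - f x /\ l - eps < q < l + eps.
Proof.
  intros Hh Ha. exists ((f (x + h) - f x) / h). split.
  - field. exact Hh.
  - apply Rabs_def2 in Ha. lra.
Qed.

Lemma deriv_min0 f a l r : derivable_pt_lim f a l -> 0 < r ->
  (forall h, Rabs h < r -> f a <= f (a + h)) -> l = 0.
Proof.
  intros Hd Hr Hm.
  destruct (Rtotal_order l 0) as [Hl|[Hl|Hl]]; [|exact Hl|].
  - destruct (Hd (- l) ltac:(lra)) as [[d Hdp] Hd'].
    simpl in Hd'.
    set (h := Rmin d r / 2).
    assert (Hm1 : Rmin d r <= d) by apply Rmin_l.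
    assert (Hm2 : Rmin d r <= r) by apply Rmin_r.
    assert (Hm3 : 0 < Rmin d r) by (apply Rmin_pos; lra).
    assert (Hh : Rabs h < d /\ Rabs h < r).
    { unfold h; rewrite Rabs_pos_eq; lra. }
    destruct (quot_bound f a l (-l) h ltac:(unfold h; lra) (Hd' h ltac:(unfold h; lra) (proj1 Hh)))
      as [q [Hq1 Hq2]].
    specialize (Hm h (proj2 Hh)). unfold h in *. nra.
  - destruct (Hd l ltac:(lra)) as [[d Hdp] Hd'].
    simpl in Hd'.
    set (h := - (Rmin d r / 2)).
    assert (Hm1 : Rmin d r <= d) by apply Rmin_l.
    assert (Hm2 : Rmin d r <= r) by apply Rmin_r.
    assert (Hm3 : 0 < Rmin d r) by (apply Rmin_pos; lra).
    assert (Hh : Rabs h < d /\ Rabs h < r).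
    { unfold h; rewrite Rabs_Ropp, Rabs_pos_eq; lra. }
    destruct (quot_bound f a l l h ltac:(unfold h; lra) (Hd' h ltac:(unfold h; lra) (proj1 Hh)))
      as [q [Hq1 Hq2]].
    specialize (Hm h (proj2 Hh)). unfold h in *. nra.
Qed.

Theorem lemma1 (w w1 w2 w3 : R -> R)
  (Hincr : forall x y, 0 <= x -> x < y -> y <= 1 -> w x < w y)
  (Hw0 : w 0 = 0) (Hw1 : w 1 = 1)
  (Hd1 : forall x, 0 <= x <= 1 -> is_derive w x (w1 x))
  (Hd2 : forall x, 0 <= x <= 1 -> is_derive w1 x (w2 x))
  (Hd3 : forall x, 0 <= x <= 1 -> is_derive w2 x (w3 x))
  (Hw1_0 : w1 0 > 1) (Hw1_1 : w1 1 > 1)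
  (Hw3 : forall x, 0 <= x <= 1 -> w3 x > 0) :
  (exists mu, is_max_ratio w mu) /\
  (forall mu, is_max_ratio w mu ->
     mu > 1 /\
     exists! p, 0 < p < 1 /\ mu * w p = p).
Proof.
  assert (D1 : forall x, 0 <= x <= 1 -> derivable_pt_lim w x (w1 x))
    by (intros; apply is_derive_Reals; auto).
  assert (D2 : forall x, 0 <= x <= 1 -> derivable_pt_lim w1 x (w2 x))
    by (intros; apply is_derive_Reals; auto).
  assert (D3 : forall x, 0 <= x <= 1 -> derivable_pt_lim w2 x (w3 x))
    by (intros; apply is_derive_Reals; auto).
  assert (Wpos : forall p, 0 < p <= 1 -> 0 < w p).
  { intros p Hp. rewrite <- Hw0. apply Hincr; lra. }
  split.
  -
    destruct (D1 0 ltac:(lra) (w1 0 - 1) ltac:(lra)) as [[d Hdp] Hd'].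
    simpl in Hd'.
    set (d0 := Rmin (d / 2) (1 / 2)).
    assert (Hm1 : d0 <= d / 2) by apply Rmin_l.
    assert (Hm2 : d0 <= 1/2) by apply Rmin_r.
    assert (Hm3 : 0 < d0) by (apply Rmin_pos; lra).
    assert (Small : forall p, 0 < p <= d0 -> p / w p < 1).
    { intros p Hp.
      assert (Hab : Rabs p < d) by (rewrite Rabs_pos_eq; lra).
      destruct (quot_bound w 0 (w1 0) (w1 0 - 1) p ltac:(lra) (Hd' p ltac:(lra) Hab))
        as [q [Hq1 Hq2]].
      rewrite Rplus_0_l, Hw0, Rminus_0_r in Hq1.
      assert (0 < w p) by (apply Wpos; lra).
      apply (Rmult_lt_reg_r (w p)); auto.
      unfold Rdiv. rewrite Rmult_assoc, Rinv_l by lra. nra. }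
    destruct (continuity_ab_maj (fun p => p / w p) d0 1 ltac:(lra)) as [M [HM1 HM2]].
    { intros c Hc.
      assert (Hw : continuity_pt w c).
      { apply derivable_continuous_pt. exists (w1 c). apply D1. lra. }
      assert (0 < w c) by (apply Wpos; lra).
      apply (continuity_pt_div id w c); auto.
      - apply derivable_continuous_pt, derivable_pt_id.
      - lra. }
    exists (M / w M). split.
    + exists M. split; [lra | reflexivity].
    + intros p Hp.
      destruct (Rle_lt_dec d0 p).
      * apply (HM1 p). lra.
      * pose proof (Small p ltac:(lra)).
        pose proof (HM1 1 ltac:(lra)). simpl in H0. rewrite Hw1 in H0. lra.
  - intros mu [[p0 [Hp0 Hmu0]] Hub].
    assert (Hmu : mu > 1).
    { destruct (D1 1 ltac:(lra) (w1 1 - 1) ltac:(lra)) as [[d Hdp] Hd'].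
      simpl in Hd'.
      set (h := - Rmin (d / 2) (1 / 2)).
      assert (Hm1 : Rmin (d/2) (1/2) <= d / 2) by apply Rmin_l.
      assert (Hm2 : Rmin (d/2) (1/2) <= 1/2) by apply Rmin_r.
      assert (Hm3 : 0 < Rmin (d/2) (1/2)) by (apply Rmin_pos; lra).
      assert (Hab : Rabs h < d) by (unfold h; rewrite Rabs_Ropp, Rabs_pos_eq; lra).
      destruct (quot_bound w 1 (w1 1) (w1 1 - 1) h ltac:(unfold h; lra) (Hd' h ltac:(unfold h; lra) Hab))
        as [q [Hq1 Hq2]].
      rewrite Hw1 in Hq1.
      assert (0 < w (1 + h)) by (apply Wpos; unfold h; lra).
      assert (w (1 + h) < 1 + h) by (unfold h in *; nra).
      pose proof (Hub (1 + h) ltac:(unfold h; lra)).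
      assert (1 < (1 + h) / w (1 + h)).
      { apply (Rmult_lt_reg_r (w (1 + h))); auto.
        unfold Rdiv. rewrite Rmult_assoc, Rinv_l by lra. lra. }
      lra. }
    split; [exact Hmu|].
    assert (Hge : forall p, 0 < p <= 1 -> p <= mu * w p).
    { intros p Hp. pose proof (Hub p Hp). pose proof (Wpos p Hp).
      replace p with ((p / w p) * w p) at 1 by (field; lra). nra. }
    set (g := fun x => mu * w x - x).
    set (g1 := fun x => mu * w1 x - 1).
    set (g2 := fun x => mu * w2 x).
    assert (G1 : forall x, 0 <= x <= 1 -> derivable_pt_lim g x (g1 x)).
    { intros x Hx. apply (derivable_pt_lim_minus (mult_real_fct mu w) id).
      - apply derivable_pt_lim_scal. auto.
      - apply derivable_pt_lim_id. }
    assert (G2 : forall x, 0 <= x <= 1 -> derivable_pt_lim g1 x (g2 x)).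
    { intros x Hx. unfold g1, g2. rewrite <- (Rminus_0_r (mu * w2 x)).
      apply (derivable_pt_lim_minus (mult_real_fct mu w1) (fct_cte 1)).
      - apply derivable_pt_lim_scal. auto.
      - apply derivable_pt_lim_const. }
    assert (G3 : forall x, 0 <= x <= 1 -> derivable_pt_lim g2 x (mu * w3 x)).
    { intros x Hx. apply (derivable_pt_lim_scal w2). auto. }
    assert (Zcrit : forall a, 0 < a < 1 -> g a = 0 -> g1 a = 0).
    { intros a Ha Hg. apply (deriv_min0 g a (g1 a) (Rmin a (1 - a))).
      - apply G1; lra.
      - apply Rmin_pos; lra.
      - intros h Hh.
        assert (Rmin a (1 - a) <= a) by apply Rmin_l.
        assert (Rmin a (1 - a) <= 1 - a) by apply Rmin_r.
        apply Rabs_def2 in Hh.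
        rewrite Hg. unfold g. pose proof (Hge (a + h) ltac:(lra)). lra. }
    assert (Hg0 : g 0 = 0) by (unfold g; rewrite Hw0; ring).
    assert (Huniq : forall a b, 0 < a -> a < b -> b < 1 -> g a = 0 -> g b = 0 -> False).
    { intros a b Ha Hab Hb Ga Gb.
      destruct (MVT_cor2 g g1 0 a Ha ltac:(intros; apply G1; lra)) as [c [Hc1 Hc2]].
      destruct (MVT_cor2 g g1 a b Hab ltac:(intros; apply G1; lra)) as [d [Hd1' Hd2']].
      assert (gc : g1 c = 0) by (rewrite Ga, Hg0 in Hc1; nra).
      assert (gd : g1 d = 0) by (rewrite Ga, Gb in Hd1'; nra).
      pose proof (Zcrit a ltac:(lra) Ga) as ga.
      destruct (MVT_cor2 g1 g2 c a ltac:(lra) ltac:(intros; apply G2; lra)) as [e1 [He1 He1']].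
      destruct (MVT_cor2 g1 g2 a d ltac:(lra) ltac:(intros; apply G2; lra)) as [e2 [He2 He2']].
      assert (g2 e1 = 0) by (rewrite gc, ga in He1; nra).
      assert (g2 e2 = 0) by (rewrite gd, ga in He2; nra).
      destruct (MVT_cor2 g2 (fun x => mu * w3 x) e1 e2 ltac:(lra) ltac:(intros; apply G3; lra)) as [e3 [He3 He3']].
      pose proof (Hw3 e3 ltac:(lra)).
      assert (mu * w3 e3 > 0) by nra.
      assert (e2 - e1 > 0) by lra.
      rewrite H, H0 in He3. nra. }
    assert (Hp1 : p0 <> 1).
    { intro E. subst p0. rewrite Hw1 in Hmu0. unfold Rdiv in Hmu0. rewrite Rinv_1 in Hmu0. lra. }
    assert (Hwp : 0 < w p0) by (apply Wpos; lra).
    exists p0. split.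
    + split; [lra|]. rewrite <- Hmu0. field. lra.
    + intros q [Hq Gq].
      assert (g p0 = 0) by (unfold g; rewrite <- Hmu0; field; lra).
      assert (g q = 0) by (unfold g; lra).
      destruct (Rtotal_order p0 q) as [L|[E|L]]; auto.
      * exfalso; apply (Huniq p0 q); lra.
      * exfalso; apply (Huniq q p0); lra.
Qed.
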